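(* Let $M$ and $F \geq 2$ be positive integers, $N = MF$, and let $u_l(0),\dots,u_l(M-1)$ be real numbers. Consider the zero-order hold fast-rate input $u_h(mF + i) = u_l(m)$ for all $m\in\{0,\dots,M-1\}$ and $i \in \{0,\dots,F-1\}$, with $u_h(k) = 0$ for $k<0$. Let $P \in \{1,\dots,N\}$ with $P > 2$, and let $\Phi\in\mathbb{R}^{M\times P}$ be the regressor matrix with entries $\Phi_{m,i} = u_h(mF - i)$ for $m=0,\dots,M-1$, $i=0,\dots,P-1$. Then the fast-rate FIR model of order $P$ is not unique, i.e., there exist $\theta\neq\theta^*\in\mathbb{R}^P$ with $\Phi(\theta-\theta^* )=0$.
   Context: A fast-rate FIR model of order $P$ with parameters $\theta = [\theta_0,\dots,\theta_{P-1}]^\top$ produces the fast-rate output $\hat y_h(n) = \sum_{i=0}^{P-1}\theta_i u_h(n-i)$; downsampling by factor $F$ gives the slow-rate output $\hat y_l(m) = \hat y_h(mF)$, $m=0,\dots,M-1$, so that $\hat y_l = \Phi\theta$ with $\Phi$ as in the claim. The fast-rate model is called unique (given $u_h$) if $\Phi(\theta-\theta^* )=0$ implies $\theta = \theta^*$. *)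

(* Defs.v *)
From HB Require Import structures.
From mathcomp Require Import all_boot all_order all_algebra.
From mathcomp Require Import reals.
Set Implicit Arguments. Unset Strict Implicit. Unset Printing Implicit Defensive.
Import Order.TTheory GRing.Theory Num.Theory.
Local Open Scope ring_scope.

Definition regressor (R : realType) (M F P : nat) (uh : int -> R) : 'M[R]_(M, P) :=
  \matrix_(m < M, i < P) uh ((m * F)%:Z - (i : nat)%:Z).

(* Main.v *)
Require Import Defs.
From HB Require Import structures.
From mathcomp Require Import all_boot all_order all_algebra.
From mathcomp Require Import reals.
From mathcomp Require Import zify.
Import Order.TTheory GRing.Theory Num.Theory.
Local Open Scope ring_scope.

Theorem lemma2 (R : realType) (M F P : nat) (ul : 'I_M -> R) (uh : int -> R)
  (hM : (0 < M)%N) (hF : (2 <= F)%N)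
  (hzoh : forall (m : 'I_M) (i : 'I_F), uh ((m * F + i)%N%:Z) = ul m)
  (hneg : forall k : int, k < 0 -> uh k = 0)
  (hP1 : (1 <= P)%N) (hPN : (P <= M * F)%N) (hP2 : (2 < P)%N) :
  exists theta thetas : 'cV[R]_P,
    theta != thetas /\ regressor M F P uh *m (theta - thetas) = 0.
Proof.
have h1 : (1 < P)%N by lia.
pose i1 := Ordinal h1; pose i2 := Ordinal hP2.
exists (delta_mx i1 0 - delta_mx i2 0), 0; split.
  apply/eqP => /matrixP /(_ i1 0); rewrite !mxE /=. rewrite subr0.
  by move=> /eqP; rewrite oner_eq0.
rewrite subr0 mulmxBr -!colE; apply/matrixP => m j; rewrite !mxE /=.
apply/eqP; rewrite subr_eq0; apply/eqP.
case: m => [[|k] hk] /=.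
  by rewrite !hneg // mul0n.
have hk' : (k < M)%N by lia.
have hF1 : (F - 1 < F)%N by lia.
have hF2 : (F - 2 < F)%N by lia.
have e1 : ((k.+1 * F)%N%:Z - (1%N)%:Z) = ((Ordinal hk' * F + Ordinal hF1)%N)%:Z
  by rewrite /=; lia.
have e2 : ((k.+1 * F)%N%:Z - (2%N)%:Z) = ((Ordinal hk' * F + Ordinal hF2)%N)%:Z
  by rewrite /=; lia.
by rewrite e1 e2 !hzoh.
Qed.
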